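(* For all integers $k\geq 1$ and $n\geq 0$, \[ f_{n}^{(k)}= \sum_{j=0}^{\lfloor n/(k+1)\rfloor} (-1)^j\,\frac{(n-jk)+j+\delta_{n,0}}{2(n-jk)+\delta_{n,0}}\, \binom{n-jk}{j}\, 2^{n-j(k+1)}, \] where $\delta_{n,0}$ is the Kronecker delta ($\delta_{n,0}=1$ if $n=0$ and $0$ otherwise).
   Context: For an integer $k\geq 1$, the $k$-bonacci numbers $f_n^{(k)}$ ($n\in\mathbb{Z}$) are defined by $f_n^{(k)}=0$ for $n<0$, $f_0^{(k)}=1$, and $f_n^{(k)}=\sum_{i=1}^{k} f_{n-i}^{(k)}$ for $n\geq 1$. Here $\lfloor x\rfloor$ is the floor function. *)

(* Defs.v *)
From mathcomp Require Import all_boot all_order all_algebra.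
Set Implicit Arguments. Unset Strict Implicit. Unset Printing Implicit Defensive.

(* kb_list k n = [:: f_n; f_{n-1}; ...; f_0] for the k-bonacci numbers.
   f_n = f_{n-1} + ... + f_{n-k}, with f_m = 0 for m < 0, f_0 = 1. *)
Fixpoint kb_list (k n : nat) : seq nat :=
  match n with
  | 0 => [:: 1]
  | n'.+1 => let s := kb_list k n' in sumn (take k s) :: s
  end.

Definition kbonacci (k n : nat) : nat := head 0 (kb_list k n).

Lemma kbonacci_test : [seq kbonacci 2 n | n <- iota 0 8] = [:: 1; 1; 2; 3; 5; 8; 13; 21].
Proof. by []. Qed.
Lemma kbonacci_test3 : [seq kbonacci 3 n | n <- iota 0 8] = [:: 1; 1; 2; 4; 7; 13; 24; 44].
Proof. by []. Qed.

(* Main.v *)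
Require Import Defs.
From mathcomp Require Import all_boot all_order all_algebra.
From mathcomp Require Import zify.
From mathcomp.algebra_tactics Require Import ring.
Import GRing.Theory Num.Theory.
Local Open Scope ring_scope.

Lemma kb_listE k n : kb_list k n = rev [seq kbonacci k i | i <- iota 0 n.+1].
Proof.
elim: n => [|n IH] //.
have -> : iota 0 n.+2 = iota 0 n.+1 ++ [:: n.+1] by rewrite -addn1 iotaD.
rewrite map_cat rev_cat /=.
by rewrite -IH /kbonacci /=.
Qed.

Definition T k n := sumn [seq kbonacci k i | i <- iota 0 n].

Lemma T_S k n : T k n.+1 = (T k n + kbonacci k n)%N.
Proof. by rewrite /T -addn1 iotaD map_cat sumn_cat /= addn0. Qed.

Lemma T_rec k n : (kbonacci k n.+1 + T k (n.+1 - k))%N = T k n.+1.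
Proof.
have -> : kbonacci k n.+1 = sumn (take k (kb_list k n)) by [].
rewrite kb_listE take_rev sumn_rev size_map size_iota.
rewrite /T.
have E : iota 0 n.+1 = iota 0 (n.+1 - k) ++ iota (n.+1 - k) (n.+1 - (n.+1 - k)).
  by rewrite -iotaD; congr iota; lia.
rewrite E !map_cat drop_size_cat; last by rewrite size_map size_iota.
by rewrite sumn_cat addnC.
Qed.
Definition c (m j : nat) : rat := (-1) ^+ j * ('C(m, j))%:R * 2 ^+ (m - j).
Definition a k n := \sum_(0 <= j < n.+1) c (n - j * k) j.
Definition b k n := if n is m.+1 then a k m else 0.

Lemma c0 m j : (m < j)%N -> c m j = 0.
Proof. by move=> h; rewrite /c bin_small // mulr0 mul0r. Qed.

Lemma cz n k j : (n < j * k.+1)%N -> c (n - j * k) j = 0.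
Proof. move=> h; apply: c0; rewrite mulnS in h; lia. Qed.

Lemma c_pascal m j : c m.+1 j.+1 = 2 * c m j.+1 - c m j.
Proof.
rewrite /c binS natrD !exprS subSS.
case: (leqP j.+1 m) => h.
  rewrite (_ : (m - j = (m - j.+1).+1)%N); last by lia.
  rewrite exprS; ring.
rewrite (bin_small h) (_ : m - j = 0)%N; last by lia.
rewrite (_ : m - j.+1 = 0)%N; last by lia.
ring.
Qed.

Lemma a_ext k n N1 N2 : (N1 <= N2)%N -> (forall j, (N1 <= j)%N -> (n < j * k.+1)%N) ->
  \sum_(0 <= j < N2) c (n - j * k) j = \sum_(0 <= j < N1) c (n - j * k) j.
Proof.
move=> le h; rewrite (@big_cat_nat _ _ _ N1 0 N2) //=.
symmetry; rewrite -[LHS]addr0; congr (_ + _); symmetry.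
rewrite big_nat_cond big1 // => j /andP [/andP [h1 _] _].
exact: cz (h _ h1).
Qed.

Lemma aN k n N : (1 <= k)%N -> (forall j, (N <= j)%N -> (n < j * k.+1)%N) ->
  \sum_(0 <= j < N) c (n - j * k) j = a k n.
Proof.
move=> hk h; rewrite /a; case: (leqP N n.+1) => hN.
  by rewrite (@a_ext k n N n.+1 hN h).
rewrite (@a_ext k n n.+1 N (ltnW hN)) // => j hj; nia.
Qed.

Lemma a_rec k n : (1 <= k)%N -> a k n.+1 = 2 * a k n - b k (n.+1 - k).
Proof.
move=> hk.
have tw : forall j, c (n.+1 - j * k) j = 2 * c (n - j * k) j -
    (if (0 < j)%N && (j * k <= n)%N then c (n - j * k) j.-1 else 0).
  case=> [|i]. by rewrite !mul0n !subn0 /c /= !subn0 !bin0 exprS subr0; ring.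
  case: (leqP (i.+1 * k) n) => h /=.
    by rewrite (subSn h) c_pascal.
  rewrite subr0 !(@c0 _ i.+1) ?mulr0 //; lia.
rewrite /a (eq_big_nat _ _ (fun j _ => tw j)) sumrB -mulr_sumr.
rewrite (@aN k n n.+2 hk); last by move=> j hj; nia.
congr (_ - _).
rewrite big_nat_recl //= add0r.
case: (leqP k n) => hkn.
  rewrite (_ : (n.+1 - k = (n - k).+1)%N); last by lia.
  rewrite /= -(@aN k (n - k) n.+1 hk); last by move=> j hj; nia.
  apply: eq_big_nat => i _.
  case: ifP => h.
    by rewrite mulSn subnDA.
  rewrite cz //; lia.
rewrite (_ : (n.+1 - k = 0)%N); last by lia.
rewrite big_nat_cond big1 // => i _; rewrite ifF //; apply/negbTE; nia.
Qed.

Lemma T_eq_b k n : (1 <= k)%N -> (T k n)%:R = b k n.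
Proof.
move=> hk; elim/ltn_ind: n => -[|[|p]] IH.
- by [].
- by rewrite /= /a big_nat1 /c.
rewrite /= a_rec // -/(b k p.+1) -(IH p.+1) // -(IH (p.+1 - k)%N); last by lia.
rewrite T_S -(T_rec k p) !natrD; ring.
Qed.

Lemma core i e :
  (-1) ^+ i.+1 * (((i + e).+1 + i.+1)%:R / (2 * (i + e).+1)%:R)
  * ('C((i + e).+1, i.+1))%:R * 2 ^+ e = c (i + e) i.+1 - c (i + e) i :> rat.
Proof.
rewrite /c (_ : (i + e - i = e)%N); last by lia.
have hd := mul_bin_diag (i + e).+1 i.
rewrite /= in hd.
rewrite binS natrD.
case: e hd => [|e] hd.
  rewrite addn0 in hd *; rewrite bin_small // binn.
    by rewrite natrM exprS; field; rewrite nat1r pnatr_eq0.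
rewrite (_ : (i + e.+1 - i.+1 = e)%N); last by lia.
have hb1 : ('C(i + e.+1, i.+1))%:R = ((i + e.+1).+1)%:R * ('C(i + e.+1, i))%:R / (i.+1)%:R
    - ('C(i + e.+1, i))%:R :> rat.
  apply: (mulIf (x := (i.+1)%:R)); first by rewrite pnatr_eq0.
  rewrite mulrBl divfK ?pnatr_eq0 // -!natrM hd mulnDr natrD; ring.
rewrite natrD hb1 natrM !exprS; field.
by rewrite !nat1r -natrD nat1r !pnatr_eq0.
Qed.

Lemma rhs_term k m j : (j * k.+1 <= m.+1)%N ->
  (-1) ^+ j
    * (((m.+1 - j * k)%N + j + (m.+1 == 0%N))%:R / (2 * (m.+1 - j * k) + (m.+1 == 0%N))%N%:R)
    * ('C(m.+1 - j * k, j))%:R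
    * 2 ^+ (m.+1 - j * k.+1)
  = c (m - j * k) j - (if (0 < j)%N then c (m - j * k) j.-1 else 0) :> rat.
Proof.
case: j => [|i] h.
  rewrite !mul0n !subn0 /= !addn0 /c subn0 !bin0 !expr0 !mul1r subr0 natrM exprS.
  by field; rewrite nat1r pnatr_eq0.
set e := (m.+1 - i.+1 * k.+1)%N.
have Hm : m = (i.+1 * k + i + e)%N by rewrite /e; rewrite mulnS in h *; lia.
rewrite (_ : (m.+1 - i.+1 * k = (i + e).+1)%N); last by lia.
rewrite (_ : (m - i.+1 * k = i + e)%N); last by lia.
by rewrite /= !addn0 -core.
Qed.

Theorem corollary3p2 (k n : nat) (hk : (1 <= k)%N) :
  (kbonacci k n)%:R =
  \sum_(0 <= j < (n %/ k.+1).+1)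
    (-1) ^+ j
    * (((n - j * k)%N + j + (n == 0%N))%:R / (2 * (n - j * k) + (n == 0%N))%N%:R)
    * ('C(n - j * k, j))%:R
    * 2 ^+ (n - j * k.+1) :> rat.
Proof.
case: n => [|m].
  by rewrite div0n big_nat1 !mul0n /= expr0 !mul1r subnn muln0 add0n invr1.
have -> : (kbonacci k m.+1)%:R = (T k m.+1)%:R - (T k (m.+1 - k))%:R :> rat.
  by rewrite -(T_rec k m) natrD addrK.
rewrite !T_eq_b //.
have tw : forall j, (0 <= j < (m.+1 %/ k.+1).+1)%N -> (j * k.+1 <= m.+1)%N.
  by move=> j /andP [_ hj]; rewrite -leq_divRL.
rewrite (eq_big_nat _ _ (fun j hj => @rhs_term k m j (tw j hj))) sumrB.
rewrite (@aN k m (m.+1 %/ k.+1).+1 hk); last first.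
  move=> j hj; rewrite ltn_divLR // in hj; exact: ltnW.
rewrite /= -/(a k m).
congr (_ - _).
rewrite big_nat_recl //= add0r.
case: (leqP k m) => hkm.
  rewrite (_ : (m.+1 - k = (m - k).+1)%N); last by lia.
  rewrite /= -(@aN k (m - k) (m.+1 %/ k.+1) hk).
    by apply: eq_big_nat => i _; rewrite mulSn subnDA.
  move=> j hj.
  have : (m.+1 < j.+1 * k.+1)%N by rewrite -ltn_divLR.
  nia.
rewrite (_ : (m.+1 - k = 0)%N); last by lia.
by rewrite divn_small // big_geq.
Qed.
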